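(* Let $G$ be a group and $L,N$ normal subgroups with $L\geqslant N$; let $i\colon N\hookrightarrow L$ be the inclusion. Assume $\mathrm{H}^1(L/N)=\mathrm{Q}(L/N)$ and $\mathrm{H}^2_b(L/N)^G=0$. Then $\mathrm{H}^1(N)^G\cap i^*\mathrm{Q}(L)^G=i^*\mathrm{H}^1(L)^G$. In particular, this equality holds whenever $L/N$ is boundedly $2$-acyclic.
   Context: $\mathrm{Q}(H)$: homogeneous quasimorphisms on a group $H$; $\mathrm{H}^1(H)$: homomorphisms $H\to\mathbb{R}$. $\mathrm{Q}(L)^G$, $\mathrm{H}^1(L)^G$, $\mathrm{H}^1(N)^G$: the elements invariant under conjugation by $G$. $i^*$ denotes restriction to $N$. $\mathrm{H}^2_b$ is second bounded cohomology with trivial real coefficients; $G$ acts on $L/N$ by conjugation, hence on $\mathrm{H}^2_b(L/N)$, and $\mathrm{H}^2_b(L/N)^G$ is the invariant part. A group $\Lambda$ is boundedly $n$-acyclic if $\mathrm{H}^k_b(\Lambda)=0$ for $1\le k\le n$. *)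

(* Defs.v *)
From Stdlib Require Import Reals.
Open Scope R_scope.

Record group := Group {
  gcar :> Type;
  gmul : gcar -> gcar -> gcar;
  ginv : gcar -> gcar;
  gone : gcar;
  gmulA : forall x y z, gmul x (gmul y z) = gmul (gmul x y) z;
  gmul1l : forall x, gmul gone x = x;
  gmulVl : forall x, gmul (ginv x) x = gone }.

Arguments gmul {g} _ _.
Arguments ginv {g} _.
Arguments gone {g}.

Fixpoint gpow {G : group} (x : G) (n : nat) : G :=
  match n with O => gone | S k => gmul x (gpow x k) end.

Definition conj {G : group} (g x : G) : G := gmul (gmul g x) (ginv g).

Definition is_subgroup {G : group} (S : G -> Prop) : Prop :=
  S gone /\ (forall x y, S x -> S y -> S (gmul x y)) /\ (forall x, S x -> S (ginv x)).

Definition is_normal {G : group} (S : G -> Prop) : Prop :=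
  is_subgroup S /\ forall g x, S x -> S (conj g x).

(** Real-valued functions on a subgroup S of G are represented by functions
    G -> R of which only the values on S matter. *)

Definition is_hom {G : group} (S : G -> Prop) (f : G -> R) : Prop :=
  forall x y, S x -> S y -> f (gmul x y) = f x + f y.

Definition is_qm {G : group} (S : G -> Prop) (f : G -> R) : Prop :=
  exists D : R, forall x y, S x -> S y -> Rabs (f (gmul x y) - f x - f y) <= D.

(** homogeneous quasimorphisms (elements of Q(S)): f(x^n) = n f(x) for all
    integers n, written as the nat case plus f(x^{-1}) = - f(x). *)
Definition is_hqm {G : group} (S : G -> Prop) (f : G -> R) : Prop :=
  is_qm S f /\
  (forall x, S x -> (forall n : nat, f (gpow x n) = INR n * f x) /\ f (ginv x) = - f x).

Definition G_invariant {G : group} (S : G -> Prop) (f : G -> R) : Prop :=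
  forall g x, S x -> f (conj g x) = f x.

Definition fullset {G : group} : G -> Prop := fun _ => True.

(** [pi : G -> Q] exhibits Q as the quotient L/N: it is multiplicative on L,
    maps L onto Q, and its kernel on L is exactly N. *)
Definition is_quotient_map {G Q : group} (L N : G -> Prop) (pi : G -> Q) : Prop :=
  (forall x y, L x -> L y -> pi (gmul x y) = gmul (pi x) (pi y)) /\
  (forall q : Q, exists l, L l /\ pi l = q) /\
  (forall l, L l -> (pi l = gone <-> N l)).

(** Bounded cohomology of a group Q with trivial real coefficients, via the
    inhomogeneous bar resolution. *)
Definition bounded1 {Q : group} (b : Q -> R) : Prop :=
  exists C, forall x, Rabs (b x) <= C.
Definition bounded2 {Q : group} (c : Q -> Q -> R) : Prop :=
  exists C, forall x y, Rabs (c x y) <= C.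
Definition delta1 {Q : group} (b : Q -> R) : Q -> Q -> R :=
  fun x y => b y - b (gmul x y) + b x.
Definition cocycle2 {Q : group} (c : Q -> Q -> R) : Prop :=
  forall x y z, c y z - c (gmul x y) z + c x (gmul y z) - c x y = 0.

Definition Hb1_vanishes (Q : group) : Prop :=
  forall b : Q -> R, bounded1 b -> (forall x y, delta1 b x y = 0) -> forall x, b x = 0.

Definition Hb2_vanishes (Q : group) : Prop :=
  forall c : Q -> Q -> R, bounded2 c -> cocycle2 c ->
    exists b, bounded1 b /\ forall x y, c x y = delta1 b x y.

Definition boundedly_2_acyclic (Q : group) : Prop :=
  Hb1_vanishes Q /\ Hb2_vanishes Q.

(** H^2_b(L/N)^G = 0, where G acts on Q = L/N (via pi) by conjugation:
    every bounded 2-cocycle whose class is G-invariant is a bounded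
    coboundary.  The class of c is g-invariant iff the conjugated cocycle
    (pi l1, pi l2) |-> c (pi (g l1 g^-1)) (pi (g l2 g^-1)) differs from c
    by a bounded coboundary (pi maps L onto Q, so this covers all of Q^2). *)
Definition Hb2_invariant_vanishes {G Q : group} (L : G -> Prop) (pi : G -> Q) : Prop :=
  forall c : Q -> Q -> R, bounded2 c -> cocycle2 c ->
    (forall g : G, exists b : Q -> R, bounded1 b /\
       forall l1 l2, L l1 -> L l2 ->
         c (pi (conj g l1)) (pi (conj g l2)) - c (pi l1) (pi l2)
         = delta1 b (pi l1) (pi l2)) ->
    exists b, bounded1 b /\ forall x y, c x y = delta1 b x y.

(** The conclusion: H^1(N)^G ∩ i^* Q(L)^G = i^* H^1(L)^G, as an equality of
    sets of functions on N (functions agreeing on N are identified). *)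
Definition restriction_equality {G : group} (L N : G -> Prop) : Prop :=
  forall psi : G -> R,
    (is_hom N psi /\ G_invariant N psi /\
      exists phi, is_hqm L phi /\ G_invariant L phi /\ forall n, N n -> phi n = psi n)
    <->
    (exists phi, is_hom L phi /\ G_invariant L phi /\ forall n, N n -> phi n = psi n).

(* Main.v *)
Require Import Defs.
From Stdlib Require Import Reals.
From Stdlib Require Import Lra ClassicalEpsilon.
Open Scope R_scope.

Lemma arch0 (a D : R) : (forall k : nat, Rabs (INR k * a) <= D) -> a = 0.
Proof.
  intros H. destruct (Req_dec a 0) as [E|E]; [exact E|exfalso].
  assert (Ha : 0 < Rabs a) by (apply Rabs_pos_lt; exact E).
  destruct (INR_unbounded (D / Rabs a)) as [k Hk].
  specialize (H k). rewrite Rabs_mult, (Rabs_pos_eq (INR k)) in H by apply pos_INR.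
  assert (D < INR k * Rabs a).
  { apply Rmult_gt_compat_r with (r := Rabs a) in Hk; [|lra].
    unfold Rdiv in Hk. rewrite Rmult_assoc, Rinv_l in Hk by lra. lra. }
  lra.
Qed.

Arguments gmulA {g} x y z.
Arguments gmul1l {g} x.
Arguments gmulVl {g} x.

Section GL.
Context {G : group}.
Implicit Types x y z a : G.

Lemma gmulKV x z : gmul (ginv x) (gmul x z) = z.
Proof. rewrite gmulA, gmulVl, gmul1l. reflexivity. Qed.

Lemma gmulV x : gmul x (ginv x) = gone.
Proof.
  transitivity (gmul (gmul (ginv (ginv x)) (ginv x)) (gmul x (ginv x))).
  { rewrite gmulVl, gmul1l. reflexivity. }
  rewrite <- gmulA. rewrite (gmulA (ginv x) x (ginv x)), gmulVl, gmul1l.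
  apply gmulVl.
Qed.

Lemma gmul1r x : gmul x gone = x.
Proof. rewrite <- (gmulVl x), gmulA, gmulV, gmul1l. reflexivity. Qed.

Lemma gmulVK x z : gmul x (gmul (ginv x) z) = z.
Proof. rewrite gmulA, gmulV, gmul1l. reflexivity. Qed.

Lemma gcancel a x y : gmul a x = gmul a y -> x = y.
Proof. intros H. rewrite <- (gmulKV a x), H, gmulKV. reflexivity. Qed.

Lemma left_inv_unique x y : gmul y x = gone -> y = ginv x.
Proof.
  intros H. rewrite <- (gmul1r y), <- (gmulV x), gmulA, H, gmul1l. reflexivity.
Qed.

Lemma ginvK x : ginv (ginv x) = x.
Proof. symmetry. apply left_inv_unique. apply gmulV. Qed.

Lemma one_unique (e : G) : gmul e e = e -> e = gone.
Proof. intros H. apply (gcancel e). rewrite gmul1r. exact H. Qed.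
End GL.

Ltac gnorm := repeat rewrite <- gmulA; repeat rewrite ?ginvK, ?gmulKV, ?gmulVK, ?gmul1l, ?gmul1r.

Lemma conj_mul {G : group} (g x y : G) : conj g (gmul x y) = gmul (conj g x) (conj g y).
Proof. unfold conj. gnorm. reflexivity. Qed.

Lemma sub_pow {G : group} (S : G -> Prop) : is_subgroup S -> forall x k, S x -> S (gpow x k).
Proof.
  intros [H1 [HM HI]] x k Hx. induction k; simpl; auto.
Qed.

Lemma hom_one {G : group} (S : G -> Prop) f : is_subgroup S -> is_hom S f -> f gone = 0.
Proof.
  intros [H1 _] Hf. pose proof (Hf gone gone H1 H1) as E. rewrite gmul1l in E. lra.
Qed.

Lemma hom_pow {G : group} (S : G -> Prop) f : is_subgroup S -> is_hom S f ->
  forall x k, S x -> f (gpow x k) = INR k * f x.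
Proof.
  intros HS Hf x k Hx. induction k.
  - simpl. rewrite (hom_one S f HS Hf). ring.
  - simpl gpow. rewrite Hf; auto; [|apply sub_pow; auto].
    rewrite IHk, S_INR. ring.
Qed.

Lemma core (G Q : group) (L N : G -> Prop) (pi : G -> Q) psi phi
 (hL : is_normal L) (hN : is_normal N) (hNL : forall x, N x -> L x) (hpi : is_quotient_map L N pi)
 (hpsi : is_hom N psi) (hpsiG : G_invariant N psi) (hphi : is_hqm L phi)
 (hphiG : G_invariant L phi) (hag : forall n, N n -> phi n = psi n)
 (HB : forall c : Q -> Q -> R, bounded2 c -> cocycle2 c ->
    (forall g : G, exists b : Q -> R, bounded1 b /\
       forall l1 l2, L l1 -> L l2 ->
         c (pi (conj g l1)) (pi (conj g l2)) - c (pi l1) (pi l2)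
         = delta1 b (pi l1) (pi l2)) ->
    exists b, bounded1 b /\ forall x y, c x y = delta1 b x y) :
 is_hom L phi.
Proof.
  destruct hphi as [[D HD] Hh].
  destruct hL as [[L1 [LM LI]] LC]. destruct hN as [[N1 [NM NI]] NC].
  assert (hLs : is_subgroup L) by (split; auto).
  assert (hNs : is_subgroup N) by (split; auto).
  destruct hpi as [pim [pis pik]].
  assert (A : forall l n, L l -> N n -> phi (gmul l n) = phi l + psi n).
  { intros l n Hl Hn.
    assert (Hk : forall k, exists m, N m /\ psi m = INR k * psi n /\
               gpow (gmul l n) k = gmul (gpow l k) m).
    { induction k as [|k [m [Hm [Pm Em]]]].
      - exists gone. split; [auto|]. split.
        + rewrite (hom_one N psi hNs hpsi). simpl. ring.
        + simpl. rewrite gmul1l. reflexivity.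
      - exists (gmul (conj (ginv (gpow l k)) n) m). split; [auto|]. split.
        + rewrite hpsi; auto. rewrite hpsiG, Pm, S_INR; auto. ring.
        + cbn [gpow]. rewrite Em. unfold conj. gnorm. reflexivity. }
    assert (E : phi (gmul l n) - phi l - psi n = 0); [|lra].
    apply (arch0 _ D). intros k. destruct (Hk k) as [m [Hm [Pm Em]]].
    replace (INR k * (phi (gmul l n) - phi l - psi n)) with
      (phi (gmul (gpow l k) m) - phi (gpow l k) - phi m).
    - apply HD; auto. apply sub_pow; auto.
    - rewrite <- Em. rewrite (proj1 (Hh _ (LM _ _ Hl (hNL _ Hn))) k).
      rewrite (proj1 (Hh _ Hl) k). rewrite (hag m Hm), Pm. ring. }
  set (Dp := fun x y => phi (gmul x y) - phi x - phi y).
  assert (pi1 : pi gone = gone).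
  { apply one_unique. rewrite <- pim; auto. rewrite gmul1l. reflexivity. }
  assert (piV : forall l, L l -> pi (ginv l) = ginv (pi l)).
  { intros l Hl. apply left_inv_unique. rewrite <- pim; auto. rewrite gmulVl. auto. }
  assert (lift : forall l l', L l -> L l' -> pi l = pi l' -> N (gmul (ginv l) l')).
  { intros l l' Hl Hl' E. apply pik; auto. rewrite pim, piV, E; auto. apply gmulVl. }
  assert (wd1 : forall l l' l2, L l -> L l' -> L l2 -> pi l = pi l' -> Dp l l2 = Dp l' l2).
  { intros l l' l2 Hl Hl' Hl2 E. pose proof (lift _ _ Hl Hl' E) as Hn.
    set (n := gmul (ginv l) l') in *.
    assert (El : l' = gmul l n) by (unfold n; gnorm; reflexivity).
    rewrite El. unfold Dp.
    assert (E2 : gmul (gmul l n) l2 = gmul (gmul l l2) (conj (ginv l2) n))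
      by (unfold conj; gnorm; reflexivity).
    rewrite E2, (A (gmul l l2)), (A l n), hpsiG; auto. ring. }
  assert (wd2 : forall l2 l l', L l -> L l' -> L l2 -> pi l = pi l' -> Dp l2 l = Dp l2 l').
  { intros l2 l l' Hl Hl' Hl2 E. pose proof (lift _ _ Hl Hl' E) as Hn.
    set (n := gmul (ginv l) l') in *.
    assert (El : l' = gmul l n) by (unfold n; gnorm; reflexivity).
    rewrite El. unfold Dp. rewrite gmulA, (A (gmul l2 l) n), (A l n); auto. ring. }
  assert (sP : forall q, {l | L l /\ pi l = q}).
  { intros q. apply constructive_indefinite_description. apply pis. }
  set (s := fun q => proj1_sig (sP q)).
  assert (sL : forall q, L (s q)) by (intros q; exact (proj1 (proj2_sig (sP q)))).
  assert (sE : forall q, pi (s q) = q) by (intros q; exact (proj2 (proj2_sig (sP q)))).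
  set (c := fun q1 q2 => Dp (s q1) (s q2)).
  assert (cE : forall l1 l2, L l1 -> L l2 -> c (pi l1) (pi l2) = Dp l1 l2).
  { intros l1 l2 H1 H2. unfold c.
    rewrite (wd1 (s (pi l1)) l1); auto. }
  destruct (HB c) as [b [[C HC] Hb]].
  - exists D. intros x y. apply HD; auto.
  - intros x y z.
    assert (Exy : gmul x y = pi (gmul (s x) (s y))) by (rewrite pim, !sE; auto).
    assert (Eyz : gmul y z = pi (gmul (s y) (s z))) by (rewrite pim, !sE; auto).
    rewrite Exy, Eyz.
    pose proof (cE (gmul (s x) (s y)) (s z)) as E1.
    pose proof (cE (s x) (gmul (s y) (s z))) as E2.
    rewrite sE in E1, E2. rewrite E1, E2; auto.
    unfold c, Dp. rewrite gmulA. ring.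
  - intros g. exists (fun _ => 0). split.
    + exists 0. intros. rewrite Rabs_R0. lra.
    + intros l1 l2 H1 H2. rewrite !cE; auto. unfold Dp, delta1.
      rewrite <- conj_mul, !hphiG; auto. ring.
  - set (h := fun l => phi l + b (pi l)).
    assert (hh : is_hom L h).
    { intros l1 l2 H1 H2. unfold h. pose proof (Hb (pi l1) (pi l2)) as E.
      rewrite cE in E; auto. unfold Dp, delta1 in E. rewrite <- pim in E; auto. lra. }
    assert (b0 : forall x, L x -> b (pi x) = 0).
    { intros x Hx. apply (arch0 _ C). intros k.
      replace (INR k * b (pi x)) with (b (pi (gpow x k))). apply HC.
      pose proof (hom_pow L h hLs hh x k Hx) as E. unfold h in E.
      rewrite (proj1 (Hh x Hx) k) in E. lra. }
    intros x y Hx Hy. pose proof (hh x y Hx Hy) as E. unfold h in E.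
    rewrite !b0 in E; auto. lra.
Qed.

Lemma rest_eq (G Q : group) (L N : G -> Prop) (pi : G -> Q)
 (hL : is_normal L) (hN : is_normal N) (hNL : forall x, N x -> L x) (hpi : is_quotient_map L N pi)
 (HB : forall c : Q -> Q -> R, bounded2 c -> cocycle2 c ->
    (forall g : G, exists b : Q -> R, bounded1 b /\
       forall l1 l2, L l1 -> L l2 ->
         c (pi (conj g l1)) (pi (conj g l2)) - c (pi l1) (pi l2)
         = delta1 b (pi l1) (pi l2)) ->
    exists b, bounded1 b /\ forall x y, c x y = delta1 b x y) :
 restriction_equality L N.
Proof.
  intros psi. split.
  - intros [hpsi [hpsiG [phi [hphi [hphiG hag]]]]]. exists phi.
    split; [eapply core; eauto | split; auto].
  - intros [phi [hphi [hphiG hag]]].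
    pose proof hL as [[L1 [LM LI]] LC]. pose proof hN as [[N1 [NM NI]] NC].
    assert (hLs : is_subgroup L) by (split; auto).
    split; [|split].
    + intros x y Nx Ny. rewrite <- !hag by auto. apply hphi; auto.
    + intros g x Nx. rewrite <- !hag by auto. apply hphiG; auto.
    + exists phi. split; [|split; auto].
      split.
      * exists 0. intros x y Hx Hy. rewrite hphi by auto.
        replace (phi x + phi y - phi x - phi y) with 0 by ring. rewrite Rabs_R0. lra.
      * intros x Hx. split.
        -- intros n. apply (hom_pow L); auto.
        -- pose proof (hphi (ginv x) x (LI _ Hx) Hx) as E. rewrite gmulVl in E.
           rewrite (hom_one L phi hLs hphi) in E. lra.
Qed.

Theorem proposition5p8 (G Q : group) (L N : G -> Prop) (pi : G -> Q)
  (hL : is_normal L) (hN : is_normal N) (hNL : forall x, N x -> L x)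
  (hpi : is_quotient_map L N pi) :
  ((forall f : Q -> R, is_hom fullset f <-> is_hqm fullset f) ->
   Hb2_invariant_vanishes L pi ->
   restriction_equality L N)
  /\
  (boundedly_2_acyclic Q -> restriction_equality L N).
Proof.
  split.
  - intros _ HB. eapply rest_eq; eauto.
  - intros [_ HB]. eapply rest_eq; eauto.
Qed.
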